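(* Let $\chi$ be an indecomposable character on $S(2^\infty)$ with GNS triple $(\pi,\mathcal{H},\xi)$. For every nice set $A\subset X$ the weak operator limit $P^A=\mathrm{w\text{-}lim}_{m\to\infty}\pi(s^A_m)$ exists, and $P^A$ is an orthogonal projection.
   Context: Let $X=\{0,1\}^{\mathbb{N}}$, $X_n=\{0,1\}^n$, and $S(2^n)$ the group of all bijections of $X_n$, acting on $X$ by $s((x,a))=(s(x),a)$ ($x\in X_n$, $a\in X$); $S(2^\infty)=\bigcup_n S(2^n)$. A character on a group $G$ is a function $\chi$ with $\chi(g_1g_2)=\chi(g_2g_1)$, $(\chi(g_ig_j^{-1}))_{i,j}$ positive semidefinite for all finite families, and $\chi(e)=1$; it is indecomposable if it is not a nontrivial convex combination of two distinct characters. The GNS triple $(\pi,\mathcal{H},\xi)$ of $\chi$ consists of a unitary representation $\pi$ of $S(2^\infty)$ on a Hilbert space $\mathcal{H}$ and a unit cyclic vector $\xi$ with $\chi(g)=(\pi(g)\xi,\xi)$. For $C\subset X_k$, $C\times X$ denotes the set of sequences in $X$ whose first $k$ coordinates form an element of $C$. A set $A\subset X$ is nice if $A=C\times X$ for some $k\in\mathbb{N}$ and $C\subset X_k$. For such $A$ and $m>k$, $s^A_m\in S(2^\infty)$ is defined by $s^A_m(x)=x$ if $x\in A$ and $s^A_m(x)=(x_1,\dots,x_{m-1},1-x_m,x_{m+1},\dots)$ if $x\notin A$. *)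

(* Defs.v *)
From HB Require Import structures.
From mathcomp Require Import all_boot all_order all_fingroup all_algebra.
From mathcomp Require Import complex reals.
Set Implicit Arguments. Unset Strict Implicit. Unset Printing Implicit Defensive.
Import Order.TTheory GRing.Theory Num.Theory.
Local Open Scope ring_scope.

(* Coordinates are indexed from 0: the paper's x_1, x_2, ... are x 0, x 1, ... *)
Definition X := nat -> bool.

Definition prefix (n : nat) (x : X) : n.-tuple bool := [tuple x i | i < n].

(* (t, a) for t in X_n and a in X: here given as t glued onto the tail of x *)
Definition glue (n : nat) (t : n.-tuple bool) (x : X) : X :=
  fun i => if (i < n)%N then nth false t i else x i.

(* g belongs to S(2^infty) = \bigcup_n S(2^n): g acts as s((t,a)) = (s(t),a)
   for some n and some bijection s of X_n *)
Definition finitary (g : X -> X) : Prop :=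
  exists n (s : {perm n.-tuple bool}), forall x, g x = glue (s (prefix n x)) x.

(* A nice set A = C x X with C \subset X_k is given by k and C : {set k.-tuple bool} *)
Definition in_nice (k : nat) (Cs : {set k.-tuple bool}) (x : X) : bool :=
  prefix k x \in Cs.

Definition flip (j : nat) (x : X) : X := fun i => if i == j then ~~ x i else x i.

(* s^A_m: identity on A, flips the paper's coordinate x_m (0-based index m-1) off A.
   (It is an element of S(2^infty) when m > k.) *)
Definition sA (k : nat) (Cs : {set k.-tuple bool}) (m : nat) (x : X) : X :=
  if in_nice Cs x then x else flip m.-1 x.

Section Defs.
Variable R : realType.
Local Notation C := R[i].

(** * Characters on S(2^infty) (functions on the subset of finitary maps) *)
Definition is_character (chi : (X -> X) -> C) : Prop :=
  [/\ (forall g1 g2, finitary g1 -> finitary g2 -> chi (g1 \o g2) = chi (g2 \o g1)),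
      (forall (n : nat) (g ginv : 'I_n -> X -> X) (c : 'I_n -> C),
         (forall i, [/\ finitary (g i), cancel (g i) (ginv i) & cancel (ginv i) (g i)]) ->
         0 <= \sum_(i < n) \sum_(j < n) (c i)^* * chi (g i \o ginv j) * c j)
    & chi id = 1].

Definition indecomposable (chi : (X -> X) -> C) : Prop :=
  is_character chi /\
  forall (t : C) (chi1 chi2 : (X -> X) -> C),
    0 < t < 1 -> is_character chi1 -> is_character chi2 ->
    (forall g, finitary g -> chi g = t * chi1 g + (1 - t) * chi2 g) ->
    (forall g, finitary g -> chi1 g = chi2 g).

Definition is_inner_product (H : lmodType C) (ip : H -> H -> C) : Prop :=
  [/\ (forall a u w v, ip (a *: u + w) v = a * ip u v + ip w v),
      (forall u v, ip u v = (ip v u)^*),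
      (forall u, 0 <= ip u u)
    & (forall u, ip u u = 0 -> u = 0)].

Definition nsq (H : lmodType C) (ip : H -> H -> C) (u : H) : C := ip u u.

Definition is_complete (H : lmodType C) (ip : H -> H -> C) : Prop :=
  forall u : nat -> H,
    (forall e : C, 0 < e -> exists N, forall m n, (N <= m)%N -> (N <= n)%N ->
        nsq ip (u m - u n) < e) ->
    exists l : H, forall e : C, 0 < e -> exists N, forall n, (N <= n)%N ->
        nsq ip (u n - l) < e.

Definition is_hilbert (H : lmodType C) (ip : H -> H -> C) : Prop :=
  is_inner_product ip /\ is_complete ip.

Definition is_unitary_rep (H : lmodType C) (ip : H -> H -> C)
    (pi : (X -> X) -> H -> H) : Prop :=
  [/\ (forall g, finitary g -> forall a u v, pi g (a *: u + v) = a *: pi g u + pi g v),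
      (forall g, finitary g -> bijective (pi g)),
      (forall g, finitary g -> forall u v, ip (pi g u) (pi g v) = ip u v),
      (forall g h, finitary g -> finitary h -> pi (g \o h) =1 pi g \o pi h)
    & pi id =1 id].

Definition is_cyclic (H : lmodType C) (ip : H -> H -> C)
    (pi : (X -> X) -> H -> H) (xi : H) : Prop :=
  forall (v : H) (e : C), 0 < e ->
    exists (n : nat) (g : 'I_n -> X -> X) (c : 'I_n -> C),
      (forall i, finitary (g i)) /\
      nsq ip (v - \sum_(i < n) c i *: pi (g i) xi) < e.

Definition is_GNS_triple (chi : (X -> X) -> C) (H : lmodType C) (ip : H -> H -> C)
    (pi : (X -> X) -> H -> H) (xi : H) : Prop :=
  [/\ is_unitary_rep ip pi, ip xi xi = 1, is_cyclic ip pi xi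
    & forall g, finitary g -> chi g = ip (pi g xi) xi].

Definition wot_limit (H : lmodType C) (ip : H -> H -> C)
    (T : nat -> H -> H) (P : H -> H) : Prop :=
  forall (u v : H) (e : C), 0 < e -> exists N, forall m, (N <= m)%N ->
    `| ip (T m u) v - ip (P u) v | < e.

Definition is_orth_projection (H : lmodType C) (ip : H -> H -> C) (P : H -> H) : Prop :=
  [/\ (forall a u v, P (a *: u + v) = a *: P u + P v),
      P \o P =1 P
    & forall u v, ip (P u) v = ip u (P v)].
End Defs.

(* Main.v *)
Require Import Defs.
From HB Require Import structures.
From mathcomp Require Import all_boot all_order all_fingroup all_algebra.
From mathcomp Require Import complex reals.
From mathcomp Require Import ring zify.
From Stdlib Require Import FunctionalExtensionality ClassicalEpsilon.
Set Implicit Arguments. Unset Strict Implicit. Unset Printing Implicit Defensive.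
Import Order.TTheory GRing.Theory Num.Theory.
Local Notation prefix := Defs.prefix.

Definition loc (n : nat) (g : X -> X) : Prop :=
  (forall x i, n <= i -> g x i = x i) /\
  (forall x y, (forall i, i < n -> x i = y i) -> forall i, i < n -> g x i = g y i).

Lemma nth_prefix n x i : i < n -> nth false (prefix n x) i = x i.
Proof.
move=> hi; rewrite /prefix.
have -> : i = nat_of_ord (Ordinal hi) by [].
by rewrite nth_mktuple.
Qed.

Lemma prefix_glue n (t : n.-tuple bool) x : prefix n (glue t x) = t.
Proof.
apply: eq_from_tnth => j; rewrite /prefix tnth_mktuple /glue ltn_ord.
by rewrite (tnth_nth false).
Qed.

Lemma glue_prefix n x : glue (prefix n x) x = x.
Proof.
apply: functional_extensionality => i; rewrite /glue.
by case: ifP => // hi; rewrite nth_prefix.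
Qed.

Lemma glue_glue n (t t' : n.-tuple bool) x : glue t (glue t' x) = glue t x.
Proof.
apply: functional_extensionality => i; rewrite /glue; case: ifP => //= hi.
by rewrite hi.
Qed.

Lemma prefix_eq n x y : (forall i, i < n -> x i = y i) -> prefix n x = prefix n y.
Proof.
by move=> h; apply: eq_from_tnth => j; rewrite /prefix !tnth_mktuple h.
Qed.

Lemma fin_loc g : finitary g -> exists n, loc n g /\ injective g.
Proof.
case=> n [s hs]; exists n; split; first split.
- by move=> x i hi; rewrite hs /glue ltnNge hi.
- move=> x y hxy i hi; rewrite !hs /glue hi.
  by rewrite (prefix_eq hxy).
- move=> x y e.
  have hp : prefix n x = prefix n y.
    apply: (perm_inj (s := s)).
    by rewrite -(prefix_glue (s (prefix n x)) x) -(prefix_glue (s (prefix n y)) y) -!hs e.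
  apply: functional_extensionality => i.
  case: (ltnP i n) => hi.
  + by rewrite -(nth_prefix x hi) -(nth_prefix y hi) hp.
  + have := congr1 (fun f => f i) e; rewrite !hs /glue ltnNge hi /=; done.
Qed.

Lemma loc_fin n g : loc n g -> injective g -> finitary g.
Proof.
move=> [h1 h2] ig.
pose x0 : X := fun _ => false.
pose f := fun t : n.-tuple bool => prefix n (g (glue t x0)).
have fi : injective f.
  move=> t1 t2 e.
  have : glue t1 x0 = glue t2 x0.
    apply: ig; apply: functional_extensionality => i.
    case: (ltnP i n) => hi.
    - by rewrite -(nth_prefix (g (glue t1 x0)) hi) -(nth_prefix (g (glue t2 x0)) hi) -/(f t1) e.
    - by rewrite !h1 // /glue ltnNge hi.
  by move=> e'; rewrite -(prefix_glue t1 x0) e' prefix_glue.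
exists n, (perm fi) => x; rewrite permE /f.
apply: functional_extensionality => i; rewrite /glue.
case: ifP => hi.
- rewrite nth_prefix //; apply: h2 => // j hj.
  by rewrite /glue hj nth_prefix.
- by rewrite h1 // leqNgt hi.
Qed.

Lemma loc_mono n n' g : loc n g -> n <= n' -> loc n' g.
Proof.
move=> [h1 h2] le; split.
- by move=> x i hi; apply: h1; apply: leq_trans hi.
- move=> x y hxy i hi; case: (ltnP i n) => hin.
  + by apply: h2 => // j hj; apply: hxy; apply: leq_trans hj _.
  + by rewrite !h1 // hxy.
Qed.

Lemma loc_comp n f g : loc n f -> loc n g -> loc n (f \o g).
Proof.
move=> [f1 f2] [g1 g2]; split.
- by move=> x i hi /=; rewrite f1 // g1.
- move=> x y hxy i hi /=; apply: f2 => // j hj; exact: g2.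
Qed.

Lemma fin_comp f g : finitary f -> finitary g -> finitary (f \o g).
Proof.
move=> /fin_loc [n1 [l1 i1]] /fin_loc [n2 [l2 i2]].
apply: (@loc_fin (maxn n1 n2)); last exact: inj_comp.
apply: loc_comp; apply: loc_mono; eauto; [exact: leq_maxl | exact: leq_maxr].
Qed.

Lemma fin_inv g : finitary g ->
  exists g', [/\ finitary g', cancel g g' & cancel g' g].
Proof.
case=> n [s hs].
exists (fun x => glue ((s^-1)%g (prefix n x)) x); split.
- by exists n, (s^-1)%g.
- by move=> x; rewrite hs prefix_glue permK glue_glue glue_prefix.
- by move=> x; rewrite hs prefix_glue permKV glue_glue glue_prefix.
Qed.

Lemma fin_id : finitary id.
Proof. by apply: (@loc_fin 0) => //; split. Qed.

Lemma prefix_flip k j x : k <= j -> prefix k (flip j x) = prefix k x.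
Proof.
move=> hj; apply: prefix_eq => i hi; rewrite /flip.
by case: eqP => // e; move: hi; rewrite e ltnNge hj.
Qed.

Lemma nice_flip k (Cs : {set k.-tuple bool}) j x : k <= j ->
  in_nice Cs (flip j x) = in_nice Cs x.
Proof. by move=> hj; rewrite /in_nice prefix_flip. Qed.

Lemma flipK j : involutive (flip j).
Proof.
move=> x; apply: functional_extensionality => i; rewrite /flip.
by case: eqP => // _; rewrite negbK.
Qed.

Lemma sA_invol k (Cs : {set k.-tuple bool}) m : k < m -> involutive (sA Cs m).
Proof.
move=> hm x; rewrite /sA; case hx: (in_nice Cs x); first by rewrite hx.
have hk : k <= m.-1 by rewrite -ltnS prednK // (leq_ltn_trans _ hm).
by rewrite nice_flip // hx flipK.
Qed.

Lemma sA_loc k (Cs : {set k.-tuple bool}) m : k < m -> loc m (sA Cs m).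
Proof.
move=> hm; split.
- move=> x i hi; rewrite /sA; case: ifP => // _; rewrite /flip.
  case: eqP => // e; move: hi; rewrite e; case: m hm {e} => //= m' _.
  by rewrite ltnn.
- move=> x y hxy i hi.
  have e : in_nice Cs x = in_nice Cs y.
    rewrite /in_nice (prefix_eq (n:=k) (x:=x) (y:=y)) // => j hj.
    by apply: hxy; apply: ltn_trans hj hm.
  by rewrite /sA e; case: ifP => _; rewrite /flip hxy.
Qed.

Lemma sA_fin k (Cs : {set k.-tuple bool}) m : k < m -> finitary (sA Cs m).
Proof.
move=> hm; apply: (loc_fin (sA_loc Cs hm)).
exact: can_inj (sA_invol Cs hm).
Qed.

Definition cnot (c t : nat) (x : X) : X :=
  fun i => if i == t then x t (+) x c else x i.

Lemma cnotK c t : c != t -> involutive (cnot c t).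
Proof.
move=> ne x; apply: functional_extensionality => i; rewrite /cnot.
case: eqP => [->|//]; rewrite eqxx (negbTE ne).
by rewrite -addbA addbb addbF.
Qed.

Lemma cnot_loc c t : loc (maxn c t).+1 (cnot c t).
Proof.
split.
- move=> x i hi; rewrite /cnot; case: eqP => // e.
  by move: hi; rewrite e ltnNge leq_maxr.
- move=> x y hxy i hi; rewrite /cnot.
  have hc : c < (maxn c t).+1 by rewrite ltnS leq_maxl.
  have ht : t < (maxn c t).+1 by rewrite ltnS leq_maxr.
  by case: eqP => _; rewrite !hxy.
Qed.

Lemma cnot_fin c t : c != t -> finitary (cnot c t).
Proof.
move=> ne; apply: (loc_fin (cnot_loc c t)); exact: can_inj (cnotK ne).
Qed.

Lemma cnot_comm n w c t : loc n w -> n <= c -> n <= t ->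
  cnot c t \o w = w \o cnot c t.
Proof.
move=> [w1 w2] hc ht; apply: functional_extensionality => x /=.
apply: functional_extensionality => i.
case: (ltnP i n) => hi.
- rewrite /cnot; have -> : (i == t) = false.
    by apply/eqP => e; move: hi; rewrite e ltnNge ht.
  apply: w2 => // j hj; have -> // : (j == t) = false.
  by apply/eqP => e; move: hj; rewrite e ltnNge ht.
- rewrite [RHS]w1 // /cnot; case: eqP => [e|ne]; last by rewrite w1.
  by rewrite !w1.
Qed.

Lemma cnot_sA k (Cs : {set k.-tuple bool}) a b :
  k < a.-1 -> k < b.-1 -> a.-1 != b.-1 -> 
  cnot b.-1 a.-1 \o sA Cs b \o cnot b.-1 a.-1 = sA Cs a \o sA Cs b.
Proof.
move=> ha hb ne; apply: functional_extensionality => x /=.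
have ka : k <= a.-1 := ltnW ha.
have kb : k <= b.-1 := ltnW hb.
have nc : forall y, in_nice Cs (cnot b.-1 a.-1 y) = in_nice Cs y.
  move=> y; rewrite /in_nice (@prefix_eq k _ y) // => i hi.
  by rewrite /cnot; case: eqP => // e; move: hi; rewrite e ltnNge ka.
have nba' : b.-1 != a.-1 by rewrite eq_sym.
rewrite /sA (nc x); case hx: (in_nice Cs x).
- by rewrite /= cnotK // hx.
- rewrite (@nice_flip k Cs b.-1 x kb) hx.
  apply: functional_extensionality => i; rewrite /cnot /flip.
  have nab : (a.-1 == b.-1) = false by apply/negbTE.
  have nba : (b.-1 == a.-1) = false by rewrite eq_sym.
  case: (eqVneq i a.-1) => [->|nia].
  + by rewrite eqxx nab nba eqxx /= ; case: (x a.-1); case: (x b.-1).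
  + done.
Qed.

Lemma flipC i j x : flip i (flip j x) = flip j (flip i x).
Proof.
apply: functional_extensionality => l; rewrite /flip.
by case: (l == i); case: (l == j).
Qed.

Lemma sA_comm k (Cs : {set k.-tuple bool}) a b x :
  k < a.-1 -> k < b.-1 -> sA Cs a (sA Cs b x) = sA Cs b (sA Cs a x).
Proof.
move=> ha hb; rewrite /sA; case hx: (in_nice Cs x); first by rewrite hx.
rewrite (@nice_flip k Cs b.-1 x (ltnW hb)) (@nice_flip k Cs a.-1 x (ltnW ha)) hx.
exact: flipC.
Qed.

Local Open Scope ring_scope.

Section IP.
Variable R : realType.
Local Notation C := R[i].
Variables (H : lmodType C) (ip : H -> H -> C).
Hypothesis hip : is_inner_product ip.

Lemma ipDZl a u w v : ip (a *: u + w) v = a * ip u v + ip w v.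
Proof. by case: hip => h _ _ _; apply: h. Qed.
Lemma ipC u v : ip u v = (ip v u)^*.
Proof. by case: hip => _ h _ _; apply: h. Qed.
Lemma nsq_ge0 u : 0 <= ip u u.
Proof. by case: hip => _ _ h _; apply: h. Qed.
Lemma nsq_eq0 u : ip u u = 0 -> u = 0.
Proof. by case: hip => _ _ _ h; apply: h. Qed.

Lemma ipDl u w v : ip (u + w) v = ip u v + ip w v.
Proof. by rewrite -[u]scale1r ipDZl mul1r scale1r. Qed.
Lemma ip0l v : ip 0 v = 0.
Proof.
have := ipDl 0 0 v; rewrite addr0 => e.
by apply/eqP; rewrite -(subrr (ip 0 v)) {2}e addrK.
Qed.
Lemma ipZl a u v : ip (a *: u) v = a * ip u v.
Proof. by rewrite -[a *: u]addr0 ipDZl ip0l addr0. Qed.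
Lemma ipNl u v : ip (- u) v = - ip u v.
Proof. by rewrite -scaleN1r ipZl mulN1r. Qed.
Lemma ipBl u w v : ip (u - w) v = ip u v - ip w v.
Proof. by rewrite ipDl ipNl. Qed.
Lemma ipDr u v w : ip u (v + w) = ip u v + ip u w.
Proof. by rewrite ipC ipDl rmorphD /= -!ipC. Qed.
Lemma ipZr a u v : ip u (a *: v) = a^* * ip u v.
Proof. by rewrite ipC ipZl rmorphM /= -ipC. Qed.
Lemma ip0r u : ip u 0 = 0.
Proof. by rewrite ipC ip0l rmorph0. Qed.
Lemma ipNr u v : ip u (- v) = - ip u v.
Proof. by rewrite ipC ipNl rmorphN /= -ipC. Qed.
Lemma ipBr u v w : ip u (v - w) = ip u v - ip u w.
Proof. by rewrite ipDr ipNr. Qed.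

Lemma ip_suml n (F : 'I_n -> H) v : ip (\sum_(i < n) F i) v = \sum_(i < n) ip (F i) v.
Proof.
elim/big_rec2: _ => [|i x y _ <-]; [exact: ip0l | exact: ipDl].
Qed.
Lemma ip_sumr n (F : 'I_n -> H) v : ip v (\sum_(i < n) F i) = \sum_(i < n) ip v (F i).
Proof.
elim/big_rec2: _ => [|i x y _ <-]; [exact: ip0r | exact: ipDr].
Qed.

Lemma nsq_real u : (ip u u)^* = ip u u.
Proof. exact: geC0_conj (nsq_ge0 u). Qed.

Lemma nsq_par u v : ip (u + v) (u + v) + ip (u - v) (u - v) =
   2 * ip u u + 2 * ip v v.
Proof.
rewrite !ipDl !ipDr !ipNl !ipNr; ring.
Qed.

Lemma nsqD2 u v : ip (u + v) (u + v) <= 2 * ip u u + 2 * ip v v.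
Proof. by rewrite -nsq_par lerDl nsq_ge0. Qed.

Lemma nsqN u : ip (- u) (- u) = ip u u.
Proof. by rewrite ipNl ipNr opprK. Qed.

Lemma nsqZ a u : ip (a *: u) (a *: u) = `|a| ^+ 2 * ip u u.
Proof. by rewrite ipZl ipZr mulrA normCK. Qed.

Lemma CS u v : `|ip u v| ^+ 2 <= ip u u * ip v v.
Proof.
have [v0|nz] := eqVneq (ip v v) 0.
  by rewrite (nsq_eq0 v0) ip0r ip0l normr0 expr2 !mulr0.
have dpos : 0 < ip v v by rewrite lt0r nz nsq_ge0.
set c := ip u v; set d := ip v v.
have := nsq_ge0 (u - (c / d) *: v).
rewrite ipBl !ipBr !ipZl !ipZr -/c -/d.
have -> : ip v u = c^* by rewrite ipC.
rewrite rmorphM /= fmorphV /= nsq_real -/d.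
have -> : ip u u - c^* / d * c - (c / d * c^* - c / d * (c^* / d * d)) =
          ip u u - c * c^* / d.
  by field.
by rewrite subr_ge0 ler_pdivrMr // -normCK.
Qed.


Lemma sum_nsq_le n (y : 'I_n -> H) :
  ip (\sum_(i < n) y i) (\sum_(i < n) y i) <= n%:R * \sum_(i < n) ip (y i) (y i).
Proof.
rewrite ip_suml.
under eq_bigr => i _ do rewrite ip_sumr.
set S := \sum_(i < n) \sum_(j < n) ip (y i) (y j).
have e : 2 * S = \sum_(i < n) \sum_(j < n) (ip (y i) (y j) + ip (y j) (y i)).
  under [in RHS]eq_bigr => i _ do rewrite big_split.
  rewrite big_split /= [X in _ + X]exchange_big /= -/S.
  by rewrite mulr2n mulrDl mul1r.
have le : \sum_(i < n) \sum_(j < n) (ip (y i) (y j) + ip (y j) (y i)) <=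
          \sum_(i < n) \sum_(j < n) (ip (y i) (y i) + ip (y j) (y j)).
  apply: ler_sum => i _; apply: ler_sum => j _.
  rewrite -subr_ge0.
  have := nsq_ge0 (y i - y j); rewrite ipBl !ipBr.
  set a := ip (y i) (y i); set b := ip (y j) (y j).
  set p := ip (y i) (y j); set q := ip (y j) (y i).
  suff -> : a + b - (p + q) = a - p - (q - b) by [].
  by ring.
have e2 : \sum_(i < n) \sum_(j < n) (ip (y i) (y i) + ip (y j) (y j)) =
          2 * (n%:R * \sum_(i < n) ip (y i) (y i)).
  under eq_bigr => i _ do rewrite big_split /= sumr_const card_ord.
  rewrite big_split /= exchange_big /=.
  under [X in _ + X]eq_bigr => j _ do rewrite sumr_const card_ord.
  rewrite sumrMnl -mulr_natr.
  set T := \sum_(i < n) _. by ring.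
rewrite -(@ler_pM2l _ 2) ?ltr0n // e -e2 //.
Qed.

Lemma eps_zero (x : C) : 0 <= x -> (forall e : C, 0 < e -> x < e) -> x = 0.
Proof.
move=> x0 h; have [//|nz] := eqVneq x 0.
have xp : 0 < x by rewrite lt0r nz.
have := h (x / 2) (divr_gt0 xp (ltr0n _ 2)).
rewrite ltr_pdivlMr ?ltr0n // mulr2n mulrDr mulr1 gtrDl.
by move/(lt_trans xp); rewrite ltxx.
Qed.

Lemma near_eq (a b : C) : (forall e : C, 0 < e -> `|a - b| < e) -> a = b.
Proof.
by move=> h; apply/eqP; rewrite -subr_eq0; apply/eqP/normr0_eq0/eps_zero.
Qed.

Lemma le_eps (x y : C) : 0 <= x -> 0 <= y -> (forall e : C, 0 < e -> x < y + e) -> x <= y.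
Proof.
move=> x0 y0 h; rewrite real_leNgt ?ger0_real //; apply/negP => yx.
have := h (x - y); rewrite subr_gt0 yx addrC subrK ltxx.
by move/(_ isT).
Qed.

Lemma sq_lt (a e : C) : 0 <= a -> 0 < e -> a ^+ 2 < e ^+ 2 -> a < e.
Proof. by move=> a0 e0; rewrite ltr_sqr // nnegrE ltW. Qed.

Lemma small (B e : C) : 0 <= B -> 0 < e -> exists d : C, [/\ 0 < d, d <= 1 & B * d < e].
Proof.
move=> B0 e0.
have den : 0 < B + e + 1 by rewrite -addrA ltr_wpDl // ltr_wpDl // ltW.
exists (e / (B + e + 1)); split.
- exact: divr_gt0.
- rewrite ler_pdivrMr // mul1r.
  have -> : B + e + 1 = e + (B + 1) by ring.
  by rewrite lerDl addr_ge0.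
- rewrite mulrA ltr_pdivrMr //.
  have -> : e * (B + e + 1) = B * e + e * (e + 1) by ring.
  by rewrite ltrDl mulr_gt0 // ltr_wpDl // ltW.
Qed.

Definition conv (y : nat -> H) (l : H) := forall e : C, 0 < e ->
  exists N, forall n, (N <= n)%N -> ip (y n - l) (y n - l) < e.

Lemma nsqB u v : ip (u - v) (u - v) = ip (v - u) (v - u).
Proof. by rewrite -nsqN opprB. Qed.

Lemma conv_uniq y l1 l2 : conv y l1 -> conv y l2 -> l1 = l2.
Proof.
move=> h1 h2; apply/eqP; rewrite -subr_eq0; apply/eqP/nsq_eq0.
apply: eps_zero; first exact: nsq_ge0.
move=> e e0.
have e4 : 0 < e / 4 by rewrite divr_gt0 // ltr0n.
have [N1 hN1] := h1 _ e4; have [N2 hN2] := h2 _ e4.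
have n1 := hN1 (maxn N1 N2) (leq_maxl _ _).
have n2 := hN2 (maxn N1 N2) (leq_maxr _ _).
set yn := y (maxn N1 N2) in n1 n2.
have -> : l1 - l2 = (l1 - yn) + (yn - l2) by rewrite addrA subrK.
apply: le_lt_trans (nsqD2 _ _) _.
rewrite nsqB.
have -> : e = 2 * (e / 4) + 2 * (e / 4).
  by field.
by rewrite ltrD // ltr_pM2l // ltr0n.
Qed.

Lemma conv_ip y l v e : conv y l -> 0 < e ->
  exists N, forall n, (N <= n)%N -> `|ip (y n) v - ip l v| < e.
Proof.
move=> h e0.
have [d [d0 d1 hd]] := small (nsq_ge0 v) (mulr_gt0 e0 e0).
have [N hN] := h d d0; exists N => n hn.
apply: sq_lt => //; rewrite -ipBl expr2 -expr2.
apply: le_lt_trans (CS _ _) _.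
apply: le_lt_trans _ hd; rewrite mulrC ler_wpM2l ?nsq_ge0 //.
exact: ltW (hN n hn).
Qed.

Lemma conv_const_ip y l v c : conv y l ->
  (exists N, forall n, (N <= n)%N -> ip (y n) v = c) -> ip l v = c.
Proof.
move=> h [N hN]; apply/esym/near_eq => e e0.
have [M hM] := conv_ip v h e0.
have := hM (maxn N M) (leq_maxr _ _); rewrite hN ?leq_maxl //.
Qed.

Lemma conv_lin y y' l l' a : conv y l -> conv y' l' ->
  conv (fun n => a *: y n + y' n) (a *: l + l').
Proof.
move=> h h' e e0.
have e2 : 0 < e / 2 by rewrite divr_gt0 // ltr0n.
have e4 : 0 < e / 4 by rewrite divr_gt0 // ltr0n.
have B0 : 0 <= 2 * `|a| ^+ 2 by rewrite mulr_ge0 ?ler0n // exprn_ge0.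
have [d [d0 _ hd]] := small B0 e2.
have [N1 hN1] := h d d0; have [N2 hN2] := h' _ e4.
exists (maxn N1 N2) => n hn.
have -> : a *: y n + y' n - (a *: l + l') = a *: (y n - l) + (y' n - l').
  by rewrite scalerBr opprD addrACA.
apply: le_lt_trans (nsqD2 _ _) _; rewrite nsqZ mulrA.
have -> : e = e / 2 + 2 * (e / 4) by field.
apply: ltr_leD.
  apply: le_lt_trans hd; rewrite ler_wpM2l //.
  by apply: ltW; apply: hN1; apply: leq_trans hn; apply: leq_maxl.
rewrite ler_wpM2l ?ler0n //; apply: ltW; apply: hN2.
by apply: leq_trans hn; apply: leq_maxr.
Qed.

Lemma conv_bound y l b : conv y l -> 0 <= b -> (forall n, ip (y n) (y n) <= b) ->
  ip l l <= 2 * b.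
Proof.
move=> h b0 hb; apply: le_eps; [exact: nsq_ge0| by rewrite mulr_ge0 ?ler0n|].
move=> e e0.
have e2 : 0 < e / 2 by rewrite divr_gt0 // ltr0n.
have [N hN] := h _ e2.
have -> : l = (l - y N) + y N by rewrite subrK.
apply: le_lt_trans (nsqD2 _ _) _.
rewrite nsqB addrC.
have -> : 2 * b + e = 2 * b + 2 * (e / 2) by congr (_ + _); field.
apply: ler_ltD; first by rewrite ler_wpM2l ?ler0n.
by rewrite ltr_pM2l ?ltr0n // hN.
Qed.

Lemma dense_ev (D : H -> Prop) (F : nat -> H -> H -> C) (K : C) :
  (forall v e, 0 < e -> exists v', D v' /\ ip (v - v') (v - v') < e) ->
  0 <= K ->
  (forall m u u' v, F m (u - u') v = F m u v - F m u' v) ->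
  (forall m u v v', F m u (v - v') = F m u v - F m u v') ->
  (forall m a b, `|F m a b| ^+ 2 <= K * ip a a * ip b b) ->
  (forall u v, D u -> D v -> exists N, forall m, (N <= m)%N -> F m u v = 0) ->
  forall u v e, 0 < e -> exists N, forall m, (N <= m)%N -> `|F m u v| < e.
Proof.
move=> dense K0 FBl FBr Fb Fz u v e e0.
have e2 : 0 < e / 2 by rewrite divr_gt0 // ltr0n.
have ee : 0 < (e / 2) ^+ 2 by rewrite exprn_gt0.
have [d1 [d10 d11 hd1]] := small (mulr_ge0 K0 (nsq_ge0 v)) ee.
have [u' [Du' hu']] := dense u d1 d10.
have B0 : 0 <= K * (2 * ip u u + 2) by rewrite mulr_ge0 // addr_ge0 ?mulr_ge0 ?ler0n ?nsq_ge0.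
have [d2 [d20 d21 hd2]] := small B0 ee.
have [v' [Dv' hv']] := dense v d2 d20.
have [N hN] := Fz _ _ Du' Dv'.
exists N => m hm.
have -> : F m u v = F m (u - u') v + F m u' (v - v') + F m u' v'.
  by rewrite FBl FBr !addrA subrK subrK.
rewrite hN // addr0.
apply: le_lt_trans (ler_normD _ _) _.
have -> : e = e / 2 + e / 2 by field.
apply: ltrD.
- apply: sq_lt => //; apply: le_lt_trans (Fb _ _ _) _.
  apply: le_lt_trans hd1; rewrite mulrAC ler_wpM2l ?mulr_ge0 ?nsq_ge0 //.
  exact: ltW.
- apply: sq_lt => //; apply: le_lt_trans (Fb _ _ _) _.
  apply: le_lt_trans hd2; rewrite -!mulrA ler_wpM2l //.
  apply: ler_pM; rewrite ?nsq_ge0 //; last exact: ltW.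
  have -> : u' = u + - (u - u') by rewrite opprB addrC subrK.
  apply: le_trans (nsqD2 _ _) _; rewrite nsqN lerD2l ler_piMr ?ler0n //.
  by apply: le_trans d11; apply: ltW.
Qed.

Lemma archC (x : C) : 0 <= x -> exists n : nat, x < n%:R.
Proof.
move=> x0; have i0 := ger0_Im x0.
exists (Num.truncn (complex.Re x)).+1.
rewrite -(rmorph_nat (real_complex R)) ltcE /= i0 eqxx /=.
exact: truncnS_gt.
Qed.

Lemma inv_small (B e : C) : 0 <= B -> 0 < e ->
  exists N : nat, forall p : nat, (N <= p)%N -> (0 < p)%N /\ B * (p%:R)^-1 < e.
Proof.
move=> B0 e0; have [N hN] := archC (divr_ge0 B0 (ltW e0)).
exists N.+1 => p hp; split; first by apply: leq_ltn_trans hp.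
have pp : 0 < (p%:R : C) by rewrite ltr0n; apply: leq_ltn_trans hp.
rewrite ltr_pdivrMr // -ltr_pdivrMl // mulrC.
apply: lt_le_trans hN _; rewrite ler_nat; exact: ltnW.
Qed.

End IP.

Section Main.
Variable R : realType.
Local Notation C := R[i].
Variables (chi : (X -> X) -> C) (H : lmodType C) (ip : H -> H -> C)
  (pi : (X -> X) -> H -> H) (xi : H) (k : nat) (Cs : {set k.-tuple bool}).
Hypothesis hip : is_inner_product ip.
Hypothesis hchi : is_character chi.
Hypothesis hrep : is_unitary_rep ip pi.
Hypothesis hgns : forall g, finitary g -> chi g = ip (pi g xi) xi.

Lemma pi_lin g : finitary g -> forall a u v, pi g (a *: u + v) = a *: pi g u + pi g v.
Proof. by case: hrep => h _ _ _ _; apply: h. Qed.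
Lemma pi_unit g : finitary g -> forall u v, ip (pi g u) (pi g v) = ip u v.
Proof. by case: hrep => _ _ h _ _; apply: h. Qed.
Lemma pi_comp g h : finitary g -> finitary h -> forall u, pi (g \o h) u = pi g (pi h u).
Proof. by case: hrep => _ _ _ e _ fg fh u; apply: e. Qed.
Lemma pi_id u : pi id u = u.
Proof. by case: hrep => _ _ _ _ e; apply: e. Qed.
Lemma chi_tr g1 g2 : finitary g1 -> finitary g2 -> chi (g1 \o g2) = chi (g2 \o g1).
Proof. by case: hchi => h _ _; apply: h. Qed.

Lemma lin0 (f : H -> H) : (forall a u v, f (a *: u + v) = a *: f u + f v) -> f 0 = 0.
Proof.
move=> hf; have := hf (-1) 0 0; rewrite scaler0 addr0 scaleN1r.
by rewrite addNr.
Qed.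

Lemma lin_sum (f : H -> H) : (forall a u v, f (a *: u + v) = a *: f u + f v) ->
  forall n (c : 'I_n -> C) (x : 'I_n -> H),
  f (\sum_(i < n) c i *: x i) = \sum_(i < n) c i *: f (x i).
Proof.
move=> hf n c x; elim/big_rec2: _ => [|i y1 y2 _ <-]; first exact: lin0.
exact: hf.
Qed.

Lemma lin_sub (f : H -> H) : (forall a u v, f (a *: u + v) = a *: f u + f v) ->
  forall u v, f (u - v) = f u - f v.
Proof.
move=> hf u v; rewrite addrC -scaleN1r hf scaleN1r addrC //.
Qed.

Definition T m := pi (sA Cs m).
Definition idx p i := (k.+2 + p * p + i)%N.
Definition Avg p u := (p%:R)^-1 *: \sum_(i < p) T (idx p i) u.

Lemma T_lin m : (k < m)%N -> forall a u v, T m (a *: u + v) = a *: T m u + T m v.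
Proof. by move=> hm; apply: pi_lin; apply: sA_fin. Qed.
Lemma T_invol m : (k < m)%N -> forall u, T m (T m u) = u.
Proof.
move=> hm u; rewrite /T -pi_comp; try exact: sA_fin.
have -> : sA Cs m \o sA Cs m = id.
  by apply: functional_extensionality => x /=; rewrite (sA_invol Cs hm).
exact: pi_id.
Qed.
Lemma T_unit m : (k < m)%N -> forall u v, ip (T m u) (T m v) = ip u v.
Proof. by move=> hm; apply: pi_unit; apply: sA_fin. Qed.
Lemma T_sa m : (k < m)%N -> forall u v, ip (T m u) v = ip u (T m v).
Proof. by move=> hm u v; rewrite -{1}(T_invol hm v) T_unit. Qed.

Lemma idx_gt p i : (k < idx p i)%N.
Proof. by rewrite /idx -addnA ltn_addr. Qed.

Lemma Avg_lin p a u v : Avg p (a *: u + v) = a *: Avg p u + Avg p v.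
Proof.
rewrite /Avg.
under eq_bigr => i _ do rewrite T_lin ?idx_gt //.
by rewrite big_split /= -scaler_sumr scalerDr !scalerA mulrC.
Qed.

Lemma Avg_sub p u v : Avg p (u - v) = Avg p u - Avg p v.
Proof. apply: lin_sub; exact: Avg_lin. Qed.

Lemma Avg_nsq p u : ip (Avg p u) (Avg p u) <= ip u u.
Proof.
rewrite /Avg nsqZ //; case: p => [|p].
  by rewrite big_ord0 ip0l // mulr0 nsq_ge0.
apply: le_trans (ler_wpM2l (exprn_ge0 _ (normr_ge0 _)) (sum_nsq_le hip _)) _.
under eq_bigr => i _ do rewrite T_unit ?idx_gt //.
rewrite sumr_const card_ord -mulr_natr ger0_norm ?invr_ge0 ?ler0n //.
have pp : (p.+1%:R : C) != 0 by rewrite pnatr_eq0.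
rewrite le_eqVlt; apply/orP; left; apply/eqP; field.
  by rewrite addrC natr1 pnatr_eq0.
by rewrite mul1r ler0n.
Qed.

Lemma pred_gt a j : (j.+2 <= a)%N -> (j < a.-1)%N.
Proof. by move=> h; lia. Qed.

Lemma core w : finitary w -> exists N, (k.+2 <= N)%N /\ forall a b, (N <= a)%N -> (N <= b)%N ->
  a != b -> chi (sA Cs a \o (sA Cs b \o w)) = chi (sA Cs b \o w).
Proof.
move=> fw; have [n [lw iw]] := fin_loc fw.
exists (maxn k n).+2; split; first by rewrite !ltnS leq_maxl.
move=> a b ha hb ne.
have ka : (k < a.-1)%N by lia.
have kb : (k < b.-1)%N by lia.
have na : (n <= a.-1)%N by lia.
have nb : (n <= b.-1)%N by lia.
have nab : a.-1 != b.-1.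
  by apply/eqP => e; move/eqP: ne; apply; lia.
have nba : b.-1 != a.-1 by rewrite eq_sym.
set g := cnot b.-1 a.-1.
have gfin : finitary g by apply: cnot_fin.
have gw := cnot_comm lw nb na.
have cs := cnot_sA Cs ka kb nab.
have key : sA Cs a \o (sA Cs b \o w) = g \o ((sA Cs b \o w) \o g).
  apply: functional_extensionality => x /=.
  have := congr1 (fun f => f (w x)) cs => /= <-.
  have := congr1 (fun f => f x) gw => /= ->; done.
rewrite key chi_tr //; last by do 2! apply: fin_comp => //; apply: sA_fin; lia.
congr chi; apply: functional_extensionality => x /=.
by rewrite /g cnotK.
Qed.

Lemma core2 w : finitary w -> exists N L, forall a b, (N <= a)%N -> (N <= b)%N ->
  chi (sA Cs a \o w) = L /\ (a != b -> chi (sA Cs a \o (sA Cs b \o w)) = L).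
Proof.
move=> fw; have [N [kN hN]] := core fw.
have eqs : forall a b, (N <= a)%N -> (N <= b)%N -> chi (sA Cs a \o w) = chi (sA Cs b \o w).
  move=> a b ha hb; case: (eqVneq a b) => [->//|ne].
  rewrite -(hN b a hb ha); last by rewrite eq_sym.
  rewrite -(hN a b ha hb ne); congr chi.
  apply: functional_extensionality => x /=; apply: sA_comm; lia.
exists N, (chi (sA Cs N \o w)) => a b ha hb; split; first exact: eqs.
by move=> ne; rewrite hN // (eqs b N).
Qed.

Lemma ip_pi g f f' : finitary g -> finitary f -> finitary f' -> cancel f' f ->
  ip (pi g xi) (pi f xi) = chi (f' \o g).
Proof.
move=> fg ff ff' c.
have e : pi g xi = pi (f \o (f' \o g)) xi.
  by congr pi; apply: functional_extensionality => x /=; rewrite c.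
rewrite e (pi_comp ff (fin_comp ff' fg)) hgns; last exact: fin_comp.
exact: (pi_unit ff).
Qed.

Lemma atom h h' : finitary h -> finitary h' -> exists N L, forall i j, (N <= i)%N -> (N <= j)%N ->
  ip (T i (pi h xi)) (pi h' xi) = L /\ (i != j -> ip (T i (pi h xi)) (T j (pi h' xi)) = L).
Proof.
move=> fh fh'; have [h'' [f'' c1 c2]] := fin_inv fh'.
have [N [L hNL]] := core2 (fin_comp fh f'').
exists (maxn N k.+2), L => i j hi hj.
have ki : (k < i)%N by lia.
have kj : (k < j)%N by lia.
have Ni : (N <= i)%N by lia.
have Nj : (N <= j)%N by lia.
have fi := sA_fin Cs ki; have fj := sA_fin Cs kj.
have Ti : T i (pi h xi) = pi (sA Cs i \o h) xi by rewrite /T pi_comp.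
have Tj : T j (pi h' xi) = pi (sA Cs j \o h') xi by rewrite /T pi_comp.
split.
- rewrite Ti (ip_pi (fin_comp fi fh) fh' f'' c2) (chi_tr f'' (fin_comp fi fh)).
  exact: (proj1 (hNL i j Ni Nj)).
- move=> ne.
  have cc : cancel (h'' \o sA Cs j) (sA Cs j \o h').
    by move=> x /=; rewrite c2 (sA_invol Cs kj).
  rewrite Ti Tj (ip_pi (fin_comp fi fh) (fin_comp fj fh') (fin_comp f'' fj) cc).
  have -> : (h'' \o sA Cs j) \o (sA Cs i \o h) = h'' \o (sA Cs j \o (sA Cs i \o h)) by [].
  rewrite (chi_tr f'' (fin_comp fj (fin_comp fi fh))).
  have := proj2 (hNL j i Nj Ni); rewrite eq_sym => /(_ ne) <-; done.
Qed.

Definition inD u := exists n (g : 'I_n -> X -> X) (c : 'I_n -> C),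
  (forall i, finitary (g i)) /\ u = \sum_(i < n) c i *: pi (g i) xi.

Lemma ip_ss n m (c : 'I_n -> C) (d : 'I_m -> C) (x : 'I_n -> H) (y : 'I_m -> H) :
  ip (\sum_(a < n) c a *: x a) (\sum_(b < m) d b *: y b) =
  \sum_(a < n) \sum_(b < m) c a * (d b)^* * ip (x a) (y b).
Proof.
rewrite ip_suml //; apply: eq_bigr => a _.
rewrite ipZl // ip_sumr // mulr_sumr; apply: eq_bigr => b _.
rewrite ipZr //; ring.
Qed.

Lemma EvD u v : inD u -> inD v -> exists N L, forall i j, (N <= i)%N -> (N <= j)%N ->
  ip (T i u) v = L /\ (i != j -> ip (T i u) (T j v) = L).
Proof.
case=> n [g [c [fg ->]]]; case=> m [h [d [fh ->]]].
pose P (p : 'I_n * 'I_m) (NL : nat * C) := forall i j, (NL.1 <= i)%N -> (NL.1 <= j)%N ->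
  ip (T i (pi (g p.1) xi)) (pi (h p.2) xi) = NL.2 /\
  (i != j -> ip (T i (pi (g p.1) xi)) (T j (pi (h p.2) xi)) = NL.2).
have A : forall p, exists NL, P p NL.
  move=> p; have [N [L hNL]] := atom (fg p.1) (fh p.2); by exists (N, L).
pose F := fun p => proj1_sig (constructive_indefinite_description _ (A p)).
have hF : forall p, P p (F p) := fun p => proj2_sig (constructive_indefinite_description _ (A p)).
exists (maxn k.+1 (\max_(p : 'I_n * 'I_m) (F p).1)),
  (\sum_(a < n) \sum_(b < m) c a * (d b)^* * (F (a, b)).2) => i j hi hj.
have ki : (k < i)%N by lia.
have kj : (k < j)%N by lia.
have Nle : forall p, ((F p).1 <= i)%N /\ ((F p).1 <= j)%N.
  move=> p; have hp : ((F p).1 <= \max_(q : 'I_n * 'I_m) (F q).1)%N.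
    exact: (@leq_bigmax _ (fun q => (F q).1) p).
  lia.
rewrite (lin_sum (T_lin ki)) ip_ss; split.
- apply: eq_bigr => a _; apply: eq_bigr => b _.
  by case: (hF (a, b) i j (proj1 (Nle _)) (proj2 (Nle _))) => -> _.
- move=> ne; rewrite (lin_sum (T_lin kj)) ip_ss.
  apply: eq_bigr => a _; apply: eq_bigr => b _.
  by case: (hF (a, b) i j (proj1 (Nle _)) (proj2 (Nle _))) => _ ->.
Qed.

Lemma idx_ge p i : (p <= idx p i)%N.
Proof. rewrite /idx; nia. Qed.

Lemma idx_neq p q (i : 'I_p) (j : 'I_q) : p != q -> idx p i != idx q j.
Proof.
move=> ne; have hi := ltn_ord i; have hj := ltn_ord j.
apply/eqP; rewrite /idx => e; move/eqP: ne; apply.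
case: (ltngtP p q) => // h; exfalso; nia.
Qed.

Lemma idx_eq p (i j : 'I_p) : (idx p i == idx p j) = (i == j).
Proof. by rewrite /idx eqn_add2l. Qed.

Lemma conj_invn (p : nat) : ((p%:R : C)^-1)^* = (p%:R)^-1.
Proof. by rewrite fmorphV /= conjC_nat. Qed.

Lemma Avg_ipAA p q u v : ip (Avg p u) (Avg q v) =
  (p%:R)^-1 * (q%:R)^-1 * \sum_(i < p) \sum_(j < q) ip (T (idx p i) u) (T (idx q j) v).
Proof.
rewrite /Avg ipZl // ipZr // conj_invn ip_suml //.
under eq_bigr => i _ do rewrite ip_sumr //.
by rewrite mulrA.
Qed.

Lemma Avg_ipl u v N L : (forall i, (N <= i)%N -> ip (T i u) v = L) ->
  forall p, (N <= p)%N -> (0 < p)%N -> ip (Avg p u) v = L.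
Proof.
move=> hN p hp p0; rewrite /Avg ipZl // ip_suml //.
under eq_bigr => i _ do rewrite hN ?(leq_trans hp (idx_ge _ _)) //.
rewrite sumr_const card_ord -[L *+ p]mulr_natl mulrA mulVf ?mul1r // pnatr_eq0 -lt0n //.
Qed.

Lemma Avg_ipr u v N L : (forall j, (N <= j)%N -> ip u (T j v) = L) ->
  forall p, (N <= p)%N -> (0 < p)%N -> ip u (Avg p v) = L.
Proof.
move=> hN p hp p0; rewrite /Avg ipZr // conj_invn ip_sumr //.
under eq_bigr => i _ do rewrite hN ?(leq_trans hp (idx_ge _ _)) //.
rewrite sumr_const card_ord -[L *+ p]mulr_natl mulrA mulVf ?mul1r // pnatr_eq0 -lt0n //.
Qed.

Lemma sum_ifeq n (i : 'I_n) (A L : C) :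
  \sum_(j < n) (if i == j then A else L) = L *+ n + (A - L).
Proof.
have -> : \sum_(j < n) (if i == j then A else L) =
          \sum_(j < n) (L + (if i == j then A - L else 0)).
  by apply: eq_bigr => j _; case: eqP => _; rewrite ?addr0 // addrC subrK.
rewrite big_split /= sumr_const card_ord; congr (_ + _).
rewrite (bigD1 i) //= eqxx big1 ?addr0 // => j; rewrite eq_sym => /negbTE -> //.
Qed.

Lemma cauchyD u : inD u -> forall e, 0 < e -> exists N, forall p q, (N <= p)%N -> (N <= q)%N ->
  ip (Avg p u - Avg q u) (Avg p u - Avg q u) < e.
Proof.
move=> Du e e0.
have [N [L hNL]] := EvD Du Du.
set A := ip u u.
have e2 : 0 < e / 2 by rewrite divr_gt0 // ltr0n.
have [M hM] := inv_small (normr_ge0 (A - L)) e2.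
exists (maxn N M) => p q hp hq.
have [p0 hpM] := hM p (leq_trans (leq_maxr _ _) hp).
have [q0 hqM] := hM q (leq_trans (leq_maxr _ _) hq).
have Np : (N <= p)%N := leq_trans (leq_maxl _ _) hp.
have Nq : (N <= q)%N := leq_trans (leq_maxl _ _) hq.
have kidx : forall r (i : 'I_r), (k < idx r i)%N := fun r i => idx_gt r i.
case: (eqVneq p q) => [->|ne]; first by rewrite subrr ip0l.
have cross : forall r s, r != s -> (N <= r)%N -> (N <= s)%N -> (0 < r)%N -> (0 < s)%N ->
    ip (Avg r u) (Avg s u) = L.
  move=> r s rs Nr Ns r0 s0; rewrite Avg_ipAA.
  have -> : \sum_(i < r) \sum_(j < s) ip (T (idx r i) u) (T (idx s j) u) =
            \sum_(i < r) \sum_(j < s) L.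
    apply: eq_bigr => i _; apply: eq_bigr => j _.
    by rewrite (proj2 (hNL _ _ (leq_trans Nr (idx_ge _ _)) (leq_trans Ns (idx_ge _ _)))) ?idx_neq.
  rewrite sumr_const card_ord sumr_const card_ord -[L *+ s]mulr_natl -[(_ * L) *+ r]mulr_natl.
  have rr : (r%:R : C) != 0 by rewrite pnatr_eq0 -lt0n.
  have ss : (s%:R : C) != 0 by rewrite pnatr_eq0 -lt0n.
  by field; rewrite ss rr.
have diag : forall r, (N <= r)%N -> (0 < r)%N ->
    ip (Avg r u) (Avg r u) = L + (A - L) / r%:R.
  move=> r Nr r0; rewrite Avg_ipAA.
  have -> : \sum_(i < r) \sum_(j < r) ip (T (idx r i) u) (T (idx r j) u) =
            \sum_(i < r) \sum_(j < r) (if i == j then A else L).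
    apply: eq_bigr => i _; apply: eq_bigr => j _.
    case: (eqVneq i j) => [->|nij]; first by rewrite T_unit.
    by rewrite (proj2 (hNL _ _ (leq_trans Nr (idx_ge _ _)) (leq_trans Nr (idx_ge _ _)))) ?idx_eq.
  under eq_bigr => i _ do rewrite sum_ifeq.
  rewrite sumr_const card_ord -[L *+ r]mulr_natl -[(_ + _) *+ r]mulr_natl.
  have rr : (r%:R : C) != 0 by rewrite pnatr_eq0 -lt0n.
  by field; rewrite ?rr.
have E : ip (Avg p u - Avg q u) (Avg p u - Avg q u) = (A - L) / p%:R + (A - L) / q%:R.
  rewrite ipBl // !ipBr // diag // diag // cross // cross 1?eq_sym //.
  by ring.
rewrite -(ger0_norm (nsq_ge0 hip _)) E.
apply: le_lt_trans (ler_normD _ _) _.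
rewrite !normrM !normfV !normr_nat.
have -> : e = e / 2 + e / 2 by field.
exact: ltrD.
Qed.

Hypothesis hcomp : is_complete ip.
Hypothesis hcyc : is_cyclic ip pi xi.

Lemma denseD v e : 0 < e -> exists v', inD v' /\ ip (v - v') (v - v') < e.
Proof.
move=> e0; have [n [g [c [fg h]]]] := hcyc v e0.
by exists (\sum_(i < n) c i *: pi (g i) xi); split => //; exists n, g, c.
Qed.

Lemma cauchy u e : 0 < e -> exists N, forall p q, (N <= p)%N -> (N <= q)%N ->
  ip (Avg p u - Avg q u) (Avg p u - Avg q u) < e.
Proof.
move=> e0.
have e16 : 0 < e / 16 by rewrite divr_gt0 // ltr0n.
have e4 : 0 < e / 4 by rewrite divr_gt0 // ltr0n.
have [u' [Du' hu']] := denseD u e16.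
have [N hN] := cauchyD Du' e4.
exists N => p q hp hq.
set z := u - u'.
have dec : Avg p u - Avg q u = (Avg p z - Avg q z) + (Avg p u' - Avg q u').
  by rewrite /z !Avg_sub; rewrite addrACA -opprD !subrK.
rewrite dec; apply: le_lt_trans (nsqD2 hip _ _) _.
have hz : ip (Avg p z - Avg q z) (Avg p z - Avg q z) <= 4 * ip z z.
  apply: le_trans (nsqD2 hip _ _) _; rewrite nsqN //.
  apply: le_trans (lerD (ler_wpM2l (ler0n _ 2) (Avg_nsq p z))
                        (ler_wpM2l (ler0n _ 2) (Avg_nsq q z))) _.
  by rewrite -mulrDl -natrD.
have -> : e = 2 * (e / 4) + 2 * (e / 4) by field.
apply: ltr_leD.
  rewrite ltr_pM2l ?ltr0n //; apply: le_lt_trans hz _.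
  have -> : e / 4 = 4 * (e / 16) by field.
  by rewrite ltr_pM2l ?ltr0n.
by rewrite ler_wpM2l ?ler0n //; apply: ltW; apply: hN.
Qed.

Definition P u := epsilon (inhabits (0 : H)) (fun l => conv ip (fun p => Avg p u) l).

Lemma P_conv u : conv ip (fun p => Avg p u) (P u).
Proof.
apply: epsilon_spec.
have [l hl] := hcomp (fun e e0 => cauchy u e0).
by exists l.
Qed.

Lemma P_lin a u v : P (a *: u + v) = a *: P u + P v.
Proof.
apply: (@conv_uniq _ _ _ hip (fun p => Avg p (a *: u + v))); first exact: P_conv.
have -> : (fun p => Avg p (a *: u + v)) = (fun p => a *: Avg p u + Avg p v).
  by apply: functional_extensionality => p; rewrite Avg_lin.
by apply: conv_lin => //; apply: P_conv.
Qed.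

Lemma P_sub u v : P (u - v) = P u - P v.
Proof. by apply: lin_sub; apply: P_lin. Qed.

Lemma P_bound u : ip (P u) (P u) <= 2 * ip u u.
Proof.
apply: (conv_bound hip (P_conv u)); first exact: nsq_ge0.
by move=> n; apply: Avg_nsq.
Qed.

Lemma P_D u v : inD u -> inD v -> exists N L,
  (forall i, (N <= i)%N -> ip (T i u) v = L) /\ ip (P u) v = L /\ ip (P u) (P v) = L.
Proof.
move=> Du Dv; have [N [L hNL]] := EvD Du Dv.
exists N, L; split; first by move=> i hi; case: (hNL i i hi hi).
split.
  apply: (conv_const_ip hip (P_conv u)); exists (maxn N 1) => n hn.
  apply: (@Avg_ipl _ _ N); [by move=> i hi; case: (hNL i i hi hi) | lia | lia].
have h1 : forall j, (N <= j)%N -> ip (P u) (T j v) = L.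
  move=> j hj; apply: (conv_const_ip hip (P_conv u)); exists (maxn (maxn N j.+1) 1) => n hn.
  apply: (@Avg_ipl _ _ (maxn N j.+1)); last by lia.
    move=> i hi; apply: (proj2 (hNL i j _ hj)); first by lia.
    apply/eqP => e; move: hi; rewrite e; lia.
  lia.
have h2 : ip (P v) (P u) = L^*.
  apply: (conv_const_ip hip (P_conv v)); exists (maxn N 1) => n hn.
  rewrite ipC // (@Avg_ipr _ _ N L) //; lia.
by rewrite ipC // h2 conjCK.
Qed.

Lemma normsq_sub (x y : C) : `|x - y| ^+ 2 <= 2 * `|x| ^+ 2 + 2 * `|y| ^+ 2.
Proof.
apply: le_trans (lerXn2r 2 _ _ (ler_normB x y)) _; rewrite ?nnegrE ?addr_ge0 //.
rewrite -subr_ge0.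
have -> : 2 * `|x| ^+ 2 + 2 * `|y| ^+ 2 - (`|x| + `|y|) ^+ 2 = (`|x| - `|y|) ^+ 2 by ring.
by apply: real_exprn_even_ge0 => //; rewrite realB // ger0_real.
Qed.

Lemma P_wot u v e : 0 < e -> exists N, forall m, (N <= m)%N ->
  `|ip (T m u) v - ip (P u) v| < e.
Proof.
move=> e0.
pose F m a b := ip (T (m + k.+1) a) b - ip (P a) b.
have FBl : forall m a a' b, F m (a - a') b = F m a b - F m a' b.
  move=> m a a' b; rewrite /F (lin_sub (T_lin (ltn_addl m (ltnSn k)))).
  rewrite P_sub !(ipBl hip); ring.
have FBr : forall m a b b', F m a (b - b') = F m a b - F m a b'.
  by move=> m a b b'; rewrite /F !(ipBr hip); ring.
have Fb : forall m a b, `|F m a b| ^+ 2 <= 6 * ip a a * ip b b.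
  move=> m a b; rewrite /F; apply: le_trans (normsq_sub _ _) _.
  apply: le_trans (lerD (ler_wpM2l (ler0n _ 2) (CS hip _ _))
                        (ler_wpM2l (ler0n _ 2) (CS hip _ _))) _.
  rewrite (T_unit (ltn_addl m (ltnSn k))).
  have hb := P_bound a.
  have h : 2 * (ip (P a) (P a) * ip b b) <= 2 * (2 * ip a a * ip b b).
    by rewrite ler_wpM2l ?ler0n // ler_wpM2r ?(nsq_ge0 hip).
  apply: le_trans (lerD (lexx _) h) _.
  by rewrite le_eqVlt; apply/orP; left; apply/eqP; ring.
have Fz : forall a b, inD a -> inD b -> exists N, forall m, (N <= m)%N -> F m a b = 0.
  move=> a b Da Db; have [N [L [h1 [h2 _]]]] := P_D Da Db.
  exists N => m hm; rewrite /F h1 ?h2 ?subrr //.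
  by apply: leq_trans hm (leq_addr _ _).
have [N hN] := dense_ev hip denseD (ler0n _ 6) FBl FBr Fb Fz u v e0.
exists (N + k.+1)%N => m hm; have := hN (m - k.+1)%N; rewrite /F subnK; last by lia.
by apply; lia.
Qed.

Lemma P_sa u v : ip (P u) v = ip u (P v).
Proof.
apply: near_eq => e e0.
have e2 : 0 < e / 2 by rewrite divr_gt0 // ltr0n.
have [N1 h1] := P_wot u v e2; have [N2 h2] := P_wot v u e2.
set m := maxn (maxn N1 N2) k.+1.
have km : (k < m)%N by lia.
have := h1 m (ltac:(lia)); have := h2 m (ltac:(lia)) => b2 b1.
have -> : ip (P u) v - ip u (P v) =
   - (ip (T m u) v - ip (P u) v) + (ip (T m v) u - ip (P v) u)^*.
  rewrite rmorphB /= -!(ipC hip) -(T_sa km); ring.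
apply: le_lt_trans (ler_normD _ _) _; rewrite normrN norm_conjC.
have -> : e = e / 2 + e / 2 by field.
exact: ltrD.
Qed.

Lemma P_idem u : P (P u) = P u.
Proof.
pose F (m : nat) a b := ip (P a) (P b) - ip (P a) b.
have FBl : forall m a a' b, F m (a - a') b = F m a b - F m a' b.
  by move=> m a a' b; rewrite /F P_sub !(ipBl hip); ring.
have FBr : forall m a b b', F m a (b - b') = F m a b - F m a b'.
  by move=> m a b b'; rewrite /F P_sub !(ipBr hip); ring.
have Fb : forall m a b, `|F m a b| ^+ 2 <= 12 * ip a a * ip b b.
  move=> m a b; rewrite /F; apply: le_trans (normsq_sub _ _) _.
  apply: le_trans (lerD (ler_wpM2l (ler0n _ 2) (CS hip _ _))
                        (ler_wpM2l (ler0n _ 2) (CS hip _ _))) _.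
  have ha := P_bound a; have hb := P_bound b.
  have a0 := nsq_ge0 hip a; have b0 := nsq_ge0 hip b.
  have pa0 := nsq_ge0 hip (P a); have pb0 := nsq_ge0 hip (P b).
  have h1 : ip (P a) (P a) * ip (P b) (P b) <= (2 * ip a a) * (2 * ip b b).
    by apply: ler_pM.
  have h2 : ip (P a) (P a) * ip b b <= (2 * ip a a) * ip b b.
    by apply: ler_wpM2r.
  apply: le_trans (lerD (ler_wpM2l (ler0n _ 2) h1) (ler_wpM2l (ler0n _ 2) h2)) _.
  by rewrite le_eqVlt; apply/orP; left; apply/eqP; ring.
have Fz : forall a b, inD a -> inD b -> exists N, forall m, (N <= m)%N -> F m a b = 0.
  move=> a b Da Db; have [N [L [_ [h2 h3]]]] := P_D Da Db.
  by exists N => m hm; rewrite /F h2 h3 subrr.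
have G : forall a b, ip (P a) (P b) = ip (P a) b.
  move=> a b; apply: near_eq => e e0.
  have [N hN] := dense_ev hip denseD (ler0n _ 12) FBl FBr Fb Fz a b e0.
  exact: (hN N (leqnn N)).
have E : forall w, ip (P (P u)) w = ip (P u) w by move=> w; rewrite P_sa G.
apply/eqP; rewrite -subr_eq0; apply/eqP; apply: (nsq_eq0 hip).
by rewrite (ipBl hip) !E subrr.
Qed.

End Main.

Unset Implicit Arguments.
Theorem mainTheorem3 (R : realType) (chi : (X -> X) -> R[i])
    (H : lmodType R[i]) (ip : H -> H -> R[i]) (pi : (X -> X) -> H -> H) (xi : H) :
  is_hilbert ip -> indecomposable chi -> is_GNS_triple chi ip pi xi ->
  forall (k : nat) (Cs : {set k.-tuple bool}),
    exists P : H -> H,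
      wot_limit ip (fun m => pi (sA Cs m)) P /\ is_orth_projection ip P.
Proof.
move=> [hip hcomp] [hchi _] [hrep _ hcyc hgns] k Cs.
exists (P ip pi Cs); split.
- move=> u v e e0; exact: (P_wot Cs hip hchi hrep hgns hcomp hcyc).
- split.
  + move=> a u v; exact: (P_lin Cs hip hchi hrep hgns hcomp hcyc).
  + move=> u /=; exact: (P_idem Cs hip hchi hrep hgns hcomp hcyc).
  + move=> u v; exact: (P_sa Cs hip hchi hrep hgns hcomp hcyc).
Qed.
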